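(* In the supercuspidal setting below, let $p$ be odd and $k\ge c_0+1$. If $p\mid a_1a_2a_3$, then $\widehat H(\psi,a_1,a_2,a_3)=0$ for every Dirichlet character $\psi$ modulo $p^k$.
   Context: Supercuspidal setting: $p$ is a prime, $L/\mathbb Q_p$ a quadratic extension with ring of integers $\mathcal O_L$, ramification index $e\in\{1,2\}$, $d=v_p(\mathrm{disc}(L/\mathbb Q_p))$; $\eta_L$ is the nontrivial quadratic character of $\mathbb Q_p^\times$ trivial on $\mathrm{Nm}(L^\times)$. $\xi$ is a character of $L^\times$ with $\xi\neq\xi\circ(\text{Galois conjugation})$ and $\xi|_{\mathbb Q_p^\times}=\eta_L$ (for $p$ odd, $(L/\mathbb Q_p,\xi)$ is an admissible pair, i.e. corresponds to a trivial central character dihedral supercuspidal representation of $\mathrm{PGL}_2(\mathbb Q_p)$). $c(\xi)$ is its conductor exponent and $c_0=c(\xi)/e$ (a positive integer). Set $\kappa=c_0$ if $p$ odd and $L$ unramified, $\kappa=c_0+1$ if $p$ odd and $L$ ramified; for $p=2$, $\kappa=c_0+199,c_0+101,c_0+102$ according as $d=0,2,3$. Let $\gamma$ be a fixed complex number of modulus $1$ depending only on $L$. For integers $m,n$ and $k\ge1$, $$H(m,n;p^k)=\overline\gamma\,p^{-d/2}\sum_{\substack{t\in(\mathcal O_L/p^k\mathcal O_L)^\times\\ \mathrm{Nm}(t)\equiv mn\ (p^k)}}\xi(t)\,e_{p^k}(-\mathrm{Tr}(t))$$ if $k\ge\kappa$ and $p\nmid mn$, and $H(m,n;p^k)=0$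 otherwise. For a Dirichlet character $\psi$ mod $p^k$ and integers $a_1,a_2,a_3$, $$\widehat H(\psi,a_1,a_2,a_3)=p^{-2k}\sum_{u,x_1,x_2,x_3\bmod p^k}\overline\psi(u)H(\overline u x_1x_2x_3,1;p^k)\,e_{p^k}(a_1x_1+a_2x_2+a_3x_3-ua_1a_2a_3).$$ Here $e_q(x)=\exp(2\pi i x/q)$ (extended $p$-adically), $\overline u$ is the inverse mod $p^k$, and Dirichlet characters vanish on non-units. *)

(* Defs.v *)
From HB Require Import structures.
From mathcomp Require Import all_boot all_order all_algebra.
From mathcomp Require Import all_classical all_reals all_analysis.
From mathcomp Require Export complex.
Set Implicit Arguments. Unset Strict Implicit. Unset Printing Implicit Defensive.
Import Order.TTheory GRing.Theory Num.Theory.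
Local Open Scope ring_scope.
Local Open Scope complex_scope.

(* The quadratic extension L/Q_p, p odd, is modelled as L = Q_p(sqrt D)    *)
(* with D an integer such that either p does not divide D and D is not a  *)
(* square mod p (L unramified), or p || D (L ramified).  In both cases    *)
(* O_L = Z_p[sqrt D].  An element a + b sqrt D of Z[sqrt D] (dense in O_L)*)
(* is represented by the pair (a, b) of integers.                          *)

Definition is_sq_mod (p : nat) (D : int) : bool :=
  [exists x : 'I_p, ((x%:Z) ^+ 2 == D %[mod p%:Z])%Z].

Definition quad_ext_data (p : nat) (D : int) : Prop :=
  [/\ prime p, odd p &
      ((~~ (p%:Z %| D)%Z && ~~ is_sq_mod p D)
       || ((p%:Z %| D)%Z && ~~ ((p ^ 2)%:Z %| D)%Z))].

Definition ramified (p : nat) (D : int) : bool := (p%:Z %| D)%Z.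
Definition ram_e (p : nat) (D : int) : nat := if ramified p D then 2 else 1.
Definition disc_d (p : nat) (D : int) : nat := if ramified p D then 1 else 0.

Definition zD := (int * int)%type.
Definition zD_mul (D : int) (z w : zD) : zD :=
  (z.1 * w.1 + D * z.2 * w.2, z.1 * w.2 + z.2 * w.1).
Definition zD_norm (D : int) (z : zD) : int := z.1 ^+ 2 - D * z.2 ^+ 2.
Definition zD_trace (z : zD) : int := 2 * z.1.
Definition zD_conj (z : zD) : zD := (z.1, - z.2).
Definition zD_unit (p : nat) (D : int) (z : zD) : bool :=
  ~~ (p%:Z %| zD_norm D z)%Z.
(* z lies in pi_L^n O_L (pi_L = p if unramified, sqrt D if ramified) *)
Definition in_piPow (p : nat) (D : int) (n : nat) (z : zD) : bool :=
  if ramified p D then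
    ((p ^ uphalf n)%:Z %| z.1)%Z && ((p ^ n./2)%:Z %| z.2)%Z
  else ((p ^ n)%:Z %| z.1)%Z && ((p ^ n)%:Z %| z.2)%Z.

(* A (continuous) character xi of L^x, given by its values on the nonzero *)
(* elements of Z[sqrt D] (which determine it, by density).                *)
Section Chars.
Variable R : realType.
Local Notation C := R[i].

Definition is_char_L (p : nat) (D : int) (xi : zD -> C) : Prop :=
  [/\ forall z, z != (0, 0) -> xi z != 0,
      forall z w, z != (0, 0) -> w != (0, 0) ->
        xi (zD_mul D z w) = xi z * xi w,
      xi (1, 0) = 1 &
      exists2 N : nat, (0 < N)%N &
        forall c d : int, xi (1 + (p ^ N)%:Z * c, (p ^ N)%:Z * d) = 1].

Definition not_galois_inv (xi : zD -> C) : Prop :=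
  exists z : zD, z != (0, 0) /\ xi z != xi (zD_conj z).

(* xi restricted to Q_p^x equals eta_L, i.e. (by definition of eta_L) it is
   a nontrivial character of Q_p^x trivial on Nm(L^x).  Q_p^x is
   represented by the (dense) nonzero integers n ~ (n, 0). *)
Definition restricts_to_etaL (D : int) (xi : zD -> C) : Prop :=
  (forall z : zD, z != (0, 0) -> xi (zD_norm D z, 0) = 1) /\
  (exists n : int, n != 0 /\ xi (n, 0) != 1).

(* xi is trivial on U_L^n = 1 + pi^n O_L  (U_L^0 = O_L^x) *)
Definition trivial_on_U (p : nat) (D : int) (xi : zD -> C) (n : nat) : Prop :=
  forall z : zD, zD_unit p D z -> in_piPow p D n (z.1 - 1, z.2) -> xi z = 1.

Definition is_conductor (p : nat) (D : int) (xi : zD -> C) (c : nat) : Prop :=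
  trivial_on_U p D xi c /\ forall n, (n < c)%N -> ~ trivial_on_U p D xi n.

Definition e_q (q : nat) (x : int) : C :=
  (cos (2 * pi * x%:~R / q%:R)) +i* (sin (2 * pi * x%:~R / q%:R)).

Definition dirichlet_char (q : nat) (psi : nat -> C) : Prop :=
  [/\ forall m n, psi (m * n)%N = psi m * psi n,
      psi 1%N = 1,
      forall n, psi (n + q)%N = psi n &
      forall n, ~~ coprime n q -> psi n = 0].

(* inverse of u modulo q (0 if u is not a unit mod q) *)
Definition invmod (q u : nat) : nat :=
  if [pick w : 'I_q | ((u * w) %% q == 1 %% q)%N] is Some w then val w else 0.

Definition kappa (p : nat) (D : int) (c0 : nat) : nat :=
  if ramified p D then c0.+1 else c0.

Definition Hfun (p : nat) (D : int) (xi : zD -> C) (gamma : C) (c0 k : nat)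
    (m n : int) : C :=
  if (kappa p D c0 <= k)%N && ~~ (p%:Z %| m * n)%Z then
    gamma^* * ((Num.sqrt (p%:R : R))%:C)^-1 ^+ disc_d p D *
    \sum_(a < p ^ k) \sum_(b < p ^ k |
        zD_unit p D (a%:Z, b%:Z) &&
        (zD_norm D (a%:Z, b%:Z) == m * n %[mod (p ^ k)%:Z])%Z)
      xi (a%:Z, b%:Z) * e_q (p ^ k) (- zD_trace (a%:Z, b%:Z))
  else 0.

Definition Hhat (p : nat) (D : int) (xi : zD -> C) (gamma : C) (c0 k : nat)
    (psi : nat -> C) (a1 a2 a3 : int) : C :=
  ((p ^ (2 * k))%:R)^-1 *
  \sum_(u < p ^ k) \sum_(x1 < p ^ k) \sum_(x2 < p ^ k) \sum_(x3 < p ^ k)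
    (psi u)^* *
    Hfun p D xi gamma c0 k ((invmod (p ^ k) u * x1 * x2 * x3)%N%:Z) 1 *
    e_q (p ^ k) (a1 * x1%:Z + a2 * x2%:Z + a3 * x3%:Z - u%:Z * a1 * a2 * a3).

End Chars.

(* Main.v *)
Require Import Defs.
From HB Require Import structures.
From mathcomp Require Import all_boot all_order all_algebra.
From mathcomp Require Import all_classical all_reals all_analysis.
From mathcomp Require Import complex ring lra.
Import Order.TTheory GRing.Theory Num.Theory.
Local Open Scope ring_scope.

Section Aux1.
Local Open Scope complex_scope.

Local Open Scope complex_scope.
Section E.
Variable R : realType.
Lemma cmulE (a b c d : R) : (a +i* b) * (c +i* d) = (a*c - b*d) +i* (a*d + b*c).
Proof. by []. Qed.
Lemma e_qD q x y : e_q R q (x + y) = e_q R q x * e_q R q y.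
Proof.
rewrite /e_q cmulE.
have -> : 2 * pi * (x + y)%:~R / q%:R = 2 * pi * x%:~R / q%:R + 2 * pi * y%:~R / q%:R :> R.
  by rewrite intrD mulrDr mulrDl.
by rewrite cosD sinD; congr (_ +i* _); rewrite addrC.
Qed.
Lemma e_q0 q : e_q R q 0 = 1.
Proof. by rewrite /e_q mulr0 mul0r cos0 sin0. Qed.
Lemma e_qq q : (0 < q)%N -> e_q R q q%:Z = 1.
Proof.
move=> q0; rewrite /e_q -mulrA pmulrn mulfV ?pnatr_eq0 -?lt0n // mulr1.
by rewrite mulr_natl cos2pi sin2pi.
Qed.
Lemma e_qMq q n : (0 < q)%N -> e_q R q (q%:Z * n) = 1.
Proof.
move=> q0; have H m : e_q R q (q%:Z * m%:Z) = 1.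
  elim: m => [|m IH]; first by rewrite mulr0 e_q0.
  by rewrite -addn1 PoszD mulrDr e_qD IH mulr1 e_qq // mul1r.
case: n => m; first exact: H.
have := e_qD q (q%:Z * Negz m) (q%:Z * m.+1%:Z).
by rewrite -mulrDr NegzE addNr mulr0 e_q0 H mulr1.
Qed.
Lemma e_q_mod q x y : (0 < q)%N -> (q%:Z %| x - y)%Z -> e_q R q x = e_q R q y.
Proof.
move=> q0 /dvdzP [n Hn]; have -> : x = y + n * q%:Z by rewrite -Hn addrC subrK.
by rewrite e_qD (mulrC n) e_qMq // mulr1.
Qed.
Lemma e_q_ne1 p K : (2 < p)%N -> e_q R (p ^ K * p)%N (p ^ K)%:Z != 1.
Proof.
move=> p2; rewrite /e_q.
have -> : 2 * pi * (p ^ K)%:Z%:~R / (p ^ K * p)%N%:R = 2 * pi / p%:R :> R.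
  have hp : (p%:R : R) != 0 by rewrite pnatr_eq0 -lt0n (ltn_trans _ p2).
  have hpK : ((p ^ K)%:R : R) != 0 by rewrite natrX expf_neq0.
  rewrite natrM pmulrn; field.
  by rewrite hp hpK.
have hs : 0 < sin (2 * pi / p%:R : R).
  apply: sin_gt0_pi; have p0 : (0 : R) < p%:R by rewrite ltr0n (ltn_trans _ p2).
  rewrite divr_gt0 ?mulr_gt0 ?pi_gt0 //=.
  rewrite ltr_pdivrMr // mulrC ltr_pM2l ?pi_gt0 //.
  by rewrite ltr_nat.
apply/negP => /eqP [] _ h; by rewrite h ltxx in hs.
Qed.
End E.
Section Xi.
Variable R : realType.
Variables (p : nat) (D : int) (xi : zD -> R[i]).
Hypothesis pp : prime p.
Hypothesis xiC : is_char_L p D xi.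

Lemma p_ndvd1 : ~~ (p%:Z %| 1)%Z.
Proof. by rewrite dvdz1 /=; case: eqP pp => // ->. Qed.

Lemma dvd_pP K : (0 < K)%N -> (p%:Z %| (p ^ K)%:Z)%Z.
Proof. by move=> K0; rewrite dvdzE /= dvdn_exp. Qed.

Lemma unit_ne0 z : zD_unit p D z -> z != (0, 0).
Proof. by apply: contraNN => /eqP -> ; rewrite /zD_norm /= expr0n /= mulr0 subr0 dvdz0. Qed.

Lemma unit_near1 K X Y : (0 < K)%N ->
  zD_unit p D (1 + (p ^ K)%:Z * X, (p ^ K)%:Z * Y).
Proof.
move=> K0; rewrite /zD_unit /zD_norm /=; set P := (p ^ K)%:Z.
have -> : (1 + P * X) ^+ 2 - D * (P * Y) ^+ 2 = 1 + P * (2 * X + P * X ^+ 2 - D * P * Y ^+ 2) by ring.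
apply: contra p_ndvd1 => h.
have h2 : (p%:Z %| P * (2 * X + P * X ^+ 2 - D * P * Y ^+ 2))%Z by apply: dvdz_mulr; apply: dvd_pP.
by have := rpredB h h2; rewrite addrK.
Qed.

Lemma unit_shift K a b s1 s2 : (0 < K)%N -> zD_unit p D (a, b) ->
  zD_unit p D (a + (p ^ K)%:Z * s1, b + (p ^ K)%:Z * s2).
Proof.
move=> K0; rewrite /zD_unit /zD_norm /=; set P := (p ^ K)%:Z.
have -> : (a + P * s1) ^+ 2 - D * (b + P * s2) ^+ 2 = (a ^+ 2 - D * b ^+ 2) + P * (2 * a * s1 + P * s1 ^+ 2 - 2 * D * b * s2 - D * P * s2 ^+ 2) by ring.
apply: contra => h.
have h2 : (p%:Z %| P * (2 * a * s1 + P * s1 ^+ 2 - 2 * D * b * s2 - D * P * s2 ^+ 2))%Z by apply: dvdz_mulr; apply: dvd_pP.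
by have := rpredB h h2; rewrite addrK.
Qed.

Variable c0 : nat.
Hypothesis triv : forall z, zD_unit p D z -> ((p ^ c0)%:Z %| z.1 - 1)%Z ->
  ((p ^ c0)%:Z %| z.2)%Z -> xi z = 1.

Lemma triv_near1 K X Y : (0 < K)%N -> (c0 <= K)%N ->
  xi (1 + (p ^ K)%:Z * X, (p ^ K)%:Z * Y) = 1.
Proof.
move=> K0 cK; apply: triv; first exact: unit_near1.
  by rewrite /= addrC addKr; apply: dvdz_mulr; rewrite dvdzE /= dvdn_exp2l.
by apply: dvdz_mulr; rewrite dvdzE /= dvdn_exp2l.
Qed.

Lemma xi_period K a b s1 s2 : (0 < K)%N -> (c0 <= K)%N -> zD_unit p D (a, b) ->
  xi (a + (p ^ K)%:Z * s1, b + (p ^ K)%:Z * s2) = xi (a, b).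
Proof.
move=> K0 cK ua; case: xiC => nz mul _ _.
set P := (p ^ K)%:Z.
have cop : coprimez (zD_norm D (a, b)) P.
  rewrite coprimezE /P /=; apply: coprimeXr.
  by rewrite coprime_sym prime_coprime // -(dvdzE p%:Z); exact: ua.
case/coprimezP: cop => [[u v]] /= Huv.
set t' := (a * u, - b * u).
have E0 : zD_mul D (a, b) t' = (1 + P * (- v), P * 0).
  rewrite /zD_mul /t' /= mulr0; congr (_, _); last by ring.
  by rewrite -Huv /zD_norm /=; ring.
have E1 : zD_mul D (a + P * s1, b + P * s2) t' =
   (1 + P * (- v + s1 * a * u - D * s2 * b * u), P * (- s1 * b * u + s2 * a * u)).
  rewrite /zD_mul /t' /=; congr (_, _); last by ring.
  have -> : 1 = u * zD_norm D (a, b) + v * P by [].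
  by rewrite /zD_norm /=; ring.
have u1 := unit_shift K a b s1 s2 K0 ua.
have t'nz : t' != (0, 0).
  apply/eqP => h; move: E0; rewrite h /zD_mul /= !mulr0 addr0 => [[]] h1.
  have := unit_near1 K (- v) 0 K0.
  by rewrite -h1 mulr0 /zD_unit /zD_norm /= expr0n /= mulr0 subr0 dvdz0.
have h0 := mul _ _ (unit_ne0 _ ua) t'nz.
have h1 := mul _ _ (unit_ne0 _ u1) t'nz.
rewrite E0 triv_near1 // in h0; rewrite E1 triv_near1 // in h1.
have xt : xi t' != 0 by apply: nz.
by apply: (mulIf xt); rewrite -h0 -h1.
Qed.
End Xi.

Lemma dvdz_ex (d X w : int) : X = d * w -> (d %| X)%Z.
Proof. by move->; apply: dvdz_mulr; apply: dvdzz. Qed.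

Lemma dvdz_eqmod (d X Y : int) : (d %| X - Y)%Z -> (d %| X)%Z = (d %| Y)%Z.
Proof.
move=> h; apply/idP/idP => h2.
  by have := rpredB h2 h; rewrite opprB addrC subrK.
by have := rpredD h h2; rewrite subrK.
Qed.

Lemma modnZ (m q : nat) : ((m %% q)%N)%:Z = m%:Z - q%:Z * ((m %/ q)%N)%:Z.
Proof. by rewrite {2}(divn_eq m q) PoszD PoszM; ring. Qed.

Lemma mod_inj (q c : nat) (q0 : (0 < q)%N) :
  injective (fun x : 'I_q => Ordinal (ltn_pmod (x + c) q0)).
Proof.
move=> x y /(congr1 val) /= /eqP; rewrite eqn_modDr !modn_small ?ltn_ord //.
by move/eqP/val_inj.
Qed.


Lemma EuclidZ (p : nat) (x y : int) : prime p ->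
  (p%:Z %| x * y)%Z = (p%:Z %| x)%Z || (p%:Z %| y)%Z.
Proof. by move=> pp; rewrite !dvdzE abszM Euclid_dvdM. Qed.

End Aux1.

Section Aux2.
Local Open Scope complex_scope.

Local Open Scope complex_scope.



Section Core.
Variable R : realType.
Variables (p : nat) (D : int) (xi : zD -> R[i]) (gamma : R[i]) (c0 K : nat).
Hypothesis pp : prime p.
Hypothesis podd : odd p.
Hypothesis xiC : is_char_L p D xi.
Hypothesis triv : forall z, zD_unit p D z -> ((p ^ c0)%:Z %| z.1 - 1)%Z ->
  ((p ^ c0)%:Z %| z.2)%Z -> xi z = 1.
Hypothesis K0 : (0 < K)%N.
Hypothesis cK : (c0 <= K)%N.
Hypothesis kap : (kappa p D c0 <= K.+1)%N.

Local Notation q := (p ^ K.+1)%N.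
Local Notation P := ((p ^ K)%N%:Z).

Lemma q0 : (0 < q)%N. Proof. by rewrite expn_gt0 prime_gt0. Qed.
Lemma qPp : q%:Z = P * p%:Z. Proof. by rewrite expnSr PoszM. Qed.

Definition Cst : R[i] := gamma^* * ((Num.sqrt (p%:R : R))%:C)^-1 ^+ disc_d p D.

Lemma HfunE (m : int) : Hfun p D xi gamma c0 K.+1 m 1 = Cst *
  \sum_(a < q) \sum_(b < q | zD_unit p D (a%:Z, b%:Z) &&
        (zD_norm D (a%:Z, b%:Z) == m * 1 %[mod q%:Z])%Z)
      xi (a%:Z, b%:Z) * e_q R q (- zD_trace (a%:Z, b%:Z)).
Proof.
rewrite /Hfun kap /=; case: ifP => // /negbFE hp.
rewrite big1 ?mulr0 // => a _; apply: big_pred0 => b.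
apply/negbTE; rewrite negb_and; case: (zD_unit _ _ _) /idP => //= hu.
apply/negP; rewrite eqz_mod_dvd => hd; move: hu.
rewrite /zD_unit; apply/negP; rewrite negbK.
have hq : (p%:Z %| q%:Z)%Z by rewrite dvdzE /= dvdn_exp.
by have := rpredD (dvdz_trans hq hd) hp; rewrite subrK.
Qed.
Variables (M : nat) (a : int).
Hypothesis hM : ~~ (p%:Z %| M%:Z)%Z.
Hypothesis ha : (p%:Z %| a)%Z.

Definition Gs (n : int) : R[i] := \sum_(x < q)
  (if (n == (M * x)%N%:Z * 1 %[mod q%:Z])%Z then e_q R q (a * x%:Z) else 0).

Lemma Gs_shift n r : Gs (n - P * r) = Gs n.
Proof.
have cop : coprimez M%:Z q%:Z.
  rewrite coprimezE /=; apply: coprimeXr.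
  by rewrite coprime_sym prime_coprime // -(dvdzE p%:Z).
case/coprimezP: cop => [[u v]] /= Huv.
set c := `|((P * r * u) %% q%:Z)%Z|%N.
have cE : c%:Z = P * r * u - ((P * r * u) %/ q%:Z)%Z * q%:Z.
  rewrite /c gez0_abs ?modz_ge0 //; last by rewrite eqz_nat -lt0n q0.
case/dvdzP: ha => a' ha'.
rewrite /Gs [RHS](reindex_inj (@mod_inj _ c q0)) /=.
apply: eq_bigr => x _.
set w := ((x + c) %/ q)%N; set w' := ((P * r * u) %/ q%:Z)%Z.
have gx : (((x + c) %% q)%N)%:Z = x%:Z + c%:Z - q%:Z * w%:Z by rewrite modnZ PoszD.
have -> : (n - P * r == (M * x)%N%:Z * 1 %[mod q%:Z])%Z =
          (n == (M * ((x + c) %% q))%N%:Z * 1 %[mod q%:Z])%Z.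
  rewrite !eqz_mod_dvd; apply: dvdz_eqmod; apply: (@dvdz_ex _ _ (- P * r * v - M%:Z * (w%:Z + w'))).
  rewrite !PoszM gx cE -/w' mulr1; apply/eqP; rewrite -subr_eq0; apply/eqP.
  transitivity (P * r * (u * M%:Z + v * q%:Z - 1)); first ring.
  by rewrite Huv subrr mulr0.
congr (if _ then _ else _); apply: e_q_mod; first exact: q0.
apply: (@dvdz_ex _ _ (- a' * r * u + a * (w%:Z + w'))).
rewrite gx cE -/w' ha' qPp; ring.
Qed.

Lemma Gs_shiftD n r : Gs (n + P * r) = Gs n.
Proof. by rewrite -(Gs_shift (n + P * r) r) addrK. Qed.

Lemma unitS1 (x y s : int) : zD_unit p D (x + P * s, y) = zD_unit p D (x, y).
Proof.
apply/idP/idP.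
  by move/(unit_shift p D K _ _ (- s) 0 K0); rewrite mulr0 addr0 mulrN addrK.
by move/(unit_shift p D K _ _ s 0 K0); rewrite mulr0 addr0.
Qed.

Definition Fa (al : 'I_q) : R[i] := \sum_(be < q)
  (if zD_unit p D (al%:Z, be%:Z) then
     xi (al%:Z, be%:Z) * e_q R q (- zD_trace (al%:Z, be%:Z)) * Gs (zD_norm D (al%:Z, be%:Z))
   else 0).

Lemma S0 : \sum_(al < q) Fa al = 0.
Proof.
set h := p./2; set d := (p ^ K * h)%N.
have h2 : (h * 2 + 1)%N = p.
  by rewrite /h muln2 halfK podd subnK // prime_gt0.
have h2z : 2 * h%:Z + 1 = p%:Z by rewrite -h2 PoszD PoszM mulrC.
have key : forall al : 'I_q, Fa (Ordinal (ltn_pmod (al + d) q0)) = e_q R q P * Fa al.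
  move=> al; rewrite /Fa big_distrr; apply: eq_bigr => be _ /=.
  set de := ((al + d) %/ q)%N.
  have gE : (((al + d) %% q)%N)%:Z = al%:Z + P * (h%:Z - p%:Z * de%:Z).
    by rewrite modnZ PoszD /d PoszM qPp; ring.
  rewrite gE unitS1; case: ifP => hu; last by rewrite mulr0.
  set s := h%:Z - p%:Z * de%:Z.
  have := @xi_period R p D xi pp xiC c0 triv K al be s 0 K0 cK hu; rewrite mulr0 addr0 => ->.
  have -> : zD_norm D (al%:Z + P * s, be%:Z) = zD_norm D (al%:Z, be%:Z) + P * (2 * al%:Z * s + P * s ^+ 2).
    by rewrite /zD_norm /=; ring.
  rewrite Gs_shiftD.
  have -> : e_q R q (- zD_trace (al%:Z + P * s, be%:Z)) = e_q R q P * e_q R q (- zD_trace (al%:Z, be%:Z)).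
    rewrite -e_qD; apply: e_q_mod; first exact: q0.
    apply: (@dvdz_ex _ _ (2 * de%:Z - 1)).
    rewrite /zD_trace /= /s qPp -h2z; ring.
  ring.
have E : \sum_(al < q) Fa al = e_q R q P * \sum_(al < q) Fa al.
  rewrite {1}(reindex_inj (@mod_inj _ d q0)) /= big_distrr /=.
  by apply: eq_bigr => al _; rewrite key.
have p2 : (2 < p)%N.
  by move: (prime_gt1 pp); rewrite leq_eqVlt => /orP [/eqP hp2|//]; by move: podd; rewrite -hp2.
have ne : e_q R q P != 1 by rewrite expnSr; apply: e_q_ne1.
apply/eqP; move/eqP: E; rewrite -subr_eq0 -{1}[\sum_(al < q) Fa al]mul1r -mulrBl mulf_eq0 subr_eq0.
by rewrite [1 == _]eq_sym (negbTE ne).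
Qed.

Lemma core : \sum_(x < q) Hfun p D xi gamma c0 K.+1 ((M * x)%N%:Z) 1 * e_q R q (a * x%:Z) = 0.
Proof.
have E1 : forall x : 'I_q, Hfun p D xi gamma c0 K.+1 ((M * x)%N%:Z) 1 * e_q R q (a * x%:Z) =
  Cst * \sum_(al < q) \sum_(be < q)
    (if zD_unit p D (al%:Z, be%:Z) && (zD_norm D (al%:Z, be%:Z) == (M * x)%N%:Z * 1 %[mod q%:Z])%Z
     then xi (al%:Z, be%:Z) * e_q R q (- zD_trace (al%:Z, be%:Z)) * e_q R q (a * x%:Z) else 0).
  move=> x; rewrite HfunE -mulrA; congr (_ * _); rewrite big_distrl; apply: eq_bigr => al _.
  rewrite big_distrl big_mkcond /=; apply: eq_bigr => be _.
  by case: ifP; rewrite ?mul0r.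
under eq_bigr => x _ do rewrite E1.
rewrite -big_distrr /=.
transitivity (Cst * \sum_(al < q) Fa al); last by rewrite S0 mulr0.
congr (_ * _).
rewrite exchange_big; apply: eq_bigr => al _; rewrite /Fa exchange_big; apply: eq_bigr => be _.
case: ifP => hu /=; last by rewrite big1.
rewrite /Gs big_distrr; apply: eq_bigr => x _ /=.
by case: ifP; rewrite ?mulr0.
Qed.
End Core.



Section C0.
Variable R : realType.
Variables (p : nat) (D : int) (xi : zD -> R[i]).
Hypothesis pp : prime p.
Hypothesis xiC : is_char_L p D xi.
Hypothesis triv0 : forall z, zD_unit p D z -> xi z = 1.
Hypothesis eta1 : forall z : zD, z != (0, 0) -> xi (zD_norm D z, 0) = 1.

Lemma eta_ndvd (x : int) : ~~ (p%:Z %| x)%Z -> ~~ (p%:Z %| - x)%Z.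
Proof. by rewrite !dvdzE abszN. Qed.

Lemma mulp0 (x y : int) : zD_mul D (p%:Z, 0) (x, y) = (p%:Z * x, p%:Z * y).
Proof. by rewrite /zD_mul /=; congr (_, _); ring. Qed.

Lemma p0nz : (p%:Z, 0) != (0, 0) :> zD.
Proof. by apply/eqP => -[] [] hp; move: pp; rewrite hp. Qed.

Lemma ram_case : (p%:Z %| D)%Z -> ~~ ((p ^ 2)%:Z %| D)%Z ->
  forall n : int, n != 0 -> xi (n, 0) = 1.
Proof.
move=> hD hD2; case: xiC => xnz mul _ _.
case/dvdzP: hD => D1 HD1.
have hD1 : ~~ (p%:Z %| D1)%Z.
  apply: contra hD2 => /dvdzP [D2 HD2]; rewrite HD1 HD2; apply: (@dvdz_ex _ _ D2).
  have -> : ((p ^ 2)%N)%:Z = p%:Z * p%:Z by rewrite -PoszM mulnn.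
  ring.
have unitn : forall n : int, ~~ (p%:Z %| n)%Z -> zD_unit p D (n, 0).
  move=> n hn; rewrite /zD_unit /zD_norm /= expr0n /= mulr0 subr0 expr2 EuclidZ //.
  by rewrite orbb.
have xp : xi (p%:Z, 0) = 1.
  have e1 : zD_mul D (p%:Z, 0) (- D1, 0) = (zD_norm D (0, 1), 0).
    by rewrite mulp0 /zD_norm HD1 /=; congr (_, _); ring.
  have u1 := unitn _ (eta_ndvd _ hD1).
  have := mul _ _ p0nz (unit_ne0 p D _ u1); rewrite e1 eta1; last first.
    by apply/eqP => -[].
  by rewrite (triv0 _ u1) mulr1.
have main : forall N (n : int), (`|n| <= N)%N -> n != 0 -> xi (n, 0) = 1.
  elim=> [|N IH] n hn nz.
    by move: nz; rewrite -absz_eq0 -leqn0 hn.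
  case: (boolP (p%:Z %| n)%Z) => hpn; last exact: triv0 _ (unitn _ hpn).
  case/dvdzP: hpn => n1 Hn1.
  have n1nz : n1 != 0 by apply: contraNN nz; rewrite Hn1 => /eqP ->; rewrite mul0r.
  have -> : (n, 0) = zD_mul D (p%:Z, 0) (n1, 0) by rewrite mulp0 Hn1 mulr0 mulrC.
  have n1z : (n1, 0) != (0, 0) :> zD by apply/eqP => -[] h; rewrite h eqxx in n1nz.
  rewrite (mul _ _ p0nz n1z) xp mul1r; apply: IH => //.
  rewrite -ltnS (leq_trans _ hn) // Hn1 abszM /=; apply: ltn_Pmulr; first exact: prime_gt1.
  by rewrite absz_gt0.
by move=> n; apply: main (leqnn _).
Qed.

Lemma unram_case : ~~ (p%:Z %| D)%Z -> ~~ is_sq_mod p D ->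
  forall z : zD, z != (0, 0) -> xi z = xi (zD_conj z).
Proof.
move=> hD hsq; case: xiC => xnz mul _ _.
have conjn : forall z, zD_norm D (zD_conj z) = zD_norm D z.
  by move=> z; rewrite /zD_norm /= sqrrN.
have pb : forall a b : int, (p%:Z %| zD_norm D (a, b))%Z -> (p%:Z %| b)%Z.
  move=> a b hN; apply/negPn/negP => hb; apply: (negP hsq).
  have cop : coprimez b p%:Z.
    by rewrite coprimezE /= coprime_sym prime_coprime // -(dvdzE p%:Z).
  case/coprimezP: cop => [[u v]] /= Huv.
  have p0 : p%:Z != 0 by rewrite eqz_nat -lt0n prime_gt0.
  set x := `|((a * u) %% p%:Z)%Z|%N.
  have xE : x%:Z = a * u - ((a * u) %/ p%:Z)%Z * p%:Z.
    rewrite /x gez0_abs ?modz_ge0 //.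
  have xlt : (x < p)%N.
    rewrite -ltz_nat /x gez0_abs ?modz_ge0 // ltz_pmod // ltz_nat prime_gt0 //.
  apply/existsP; exists (Ordinal xlt) => /=; rewrite eqz_mod_dvd.
  set w := ((a * u) %/ p%:Z)%Z.
  have -> : x%:Z ^+ 2 - D = (a * u - w * p%:Z) ^+ 2 - D * (u * b + v * p%:Z) ^+ 2.
    by rewrite xE Huv expr1n mulr1.
  have -> : (a * u - w * p%:Z) ^+ 2 - D * (u * b + v * p%:Z) ^+ 2 =
     u ^+ 2 * zD_norm D (a, b) + p%:Z * (- 2 * a * u * w + w ^+ 2 * p%:Z - D * (2 * u * b * v + v ^+ 2 * p%:Z)).
    by rewrite /zD_norm /=; ring.
  by apply: rpredD; [apply: dvdz_mull | apply: dvdz_mulr; apply: dvdzz].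
have main : forall N (z : zD), (`|z.1| + `|z.2| <= N)%N -> z != (0, 0) -> xi z = xi (zD_conj z).
  elim=> [|N IH] [a b] /= hn nz.
    move: nz; rewrite leqn0 addn_eq0 !absz_eq0 in hn.
    by case/andP: hn => /eqP -> /eqP ->; rewrite eqxx.
  case: (boolP (zD_unit p D (a, b))) => hu.
    rewrite !triv0 //; by rewrite /zD_unit conjn.
  move: hu; rewrite /zD_unit negbK => hN.
  have hb := pb _ _ hN.
  have ha : (p%:Z %| a)%Z.
    have : (p%:Z %| zD_norm D (a, b) + D * (b * b))%Z.
      by apply: rpredD => //; apply: dvdz_mull; apply: dvdz_mull.
    by rewrite /zD_norm /= expr2 -expr2 subrK expr2 EuclidZ // orbb.
  case/dvdzP: ha => a1 Ha; case/dvdzP: hb => b1 Hb.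
  have nz1 : (a1, b1) != (0, 0) :> zD.
    by apply: contraNN nz => /eqP [] h1 h2; rewrite Ha Hb h1 h2 !mul0r.
  have nz2 : (a1, - b1) != (0, 0) :> zD.
    by apply: contraNN nz1 => /eqP [] h1 /eqP; rewrite oppr_eq0 h1 => /eqP ->.
  have -> : (a, b) = zD_mul D (p%:Z, 0) (a1, b1) by rewrite mulp0 Ha Hb (mulrC a1) (mulrC b1).
  have -> : zD_conj (zD_mul D (p%:Z, 0) (a1, b1)) = zD_mul D (p%:Z, 0) (a1, - b1).
    by rewrite !mulp0 /zD_conj /= mulrN.
  have nz1c := nz1; rewrite !(mul _ _ p0nz) //; congr (_ * _); apply: IH nz1 => /=.
  rewrite -ltnS (leq_trans _ hn) // Ha Hb !abszM -mulnDl; apply: ltn_Pmulr; first exact: prime_gt1.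
  by rewrite lt0n addn_eq0 !absz_eq0 negb_and; case: (a1 =P 0) nz1c => [->|] //= ; case: (b1 =P 0) => [->|]; rewrite ?eqxx.
by move=> z; apply: main (leqnn _).
Qed.
End C0.

End Aux2.


Lemma core_all (R : realType) p D (xi : zD -> R[i]) gamma c0 K
  (pp : prime p) (podd : odd p) (xiC : is_char_L p D xi)
  (triv : forall z, zD_unit p D z -> ((p ^ c0)%:Z %| z.1 - 1)%Z ->
     ((p ^ c0)%:Z %| z.2)%Z -> xi z = 1)
  (K0 : (0 < K)%N) (cK : (c0 <= K)%N) (kap : (kappa p D c0 <= K.+1)%N)
  (M : nat) (a : int) (ha : (p%:Z %| a)%Z) :
  \sum_(x < p ^ K.+1) Hfun p D xi gamma c0 K.+1 ((M * x)%N%:Z) 1 * e_q R (p ^ K.+1) (a * x%:Z) = 0.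
Proof.
case: (boolP (p%:Z %| M%:Z)%Z) => hM; last exact: (@core R p D xi gamma c0 K pp podd xiC triv K0 cK kap M a hM ha).
apply: big1 => x _; rewrite /Hfun; case: ifP; last by rewrite mul0r.
by case/andP => _ /negP []; rewrite mulr1 PoszM; apply: dvdz_mulr.
Qed.

Lemma c0_pos (R : realType) p D (xi : zD -> R[i]) :
  quad_ext_data p D -> is_char_L p D xi -> not_galois_inv xi ->
  restricts_to_etaL D xi -> trivial_on_U p D xi 0 -> False.
Proof.
move=> [pp podd hcase] xiC ngal [eta1 [n0 [n0nz xn0]]] tr.
have triv0 : forall z, zD_unit p D z -> xi z = 1.
  by move=> z hu; apply: tr => //; rewrite /in_piPow; case: ifP; rewrite /= !dvd1z.
case/orP: hcase => [/andP [hD hsq] | /andP [hD hD2]].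
  case: ngal => z [znz]; by rewrite (@unram_case R p D xi pp xiC triv0 hD hsq z znz) eqxx.
by move: xn0; rewrite (@ram_case R p D xi pp xiC triv0 eta1 hD hD2 n0 n0nz) eqxx.
Qed.

Theorem lemma5p2 (R : realType) (p : nat) (D : int) (xi : zD -> R[i])
    (gamma : R[i]) (c c0 k : nat) (psi : nat -> R[i]) (a1 a2 a3 : int) :
  quad_ext_data p D ->
  is_char_L p D xi ->
  not_galois_inv xi ->
  restricts_to_etaL D xi ->
  is_conductor p D xi c ->
  c = (ram_e p D * c0)%N ->
  `|gamma| = 1 ->
  (c0.+1 <= k)%N ->
  dirichlet_char (p ^ k) psi ->
  (p%:Z %| a1 * a2 * a3)%Z ->
  Hhat p D xi gamma c0 k psi a1 a2 a3 = 0.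
Proof.
move=> qd xiC ngal eta [trivc _] hc _ hk _ ha.
have c0pos : (0 < c0)%N.
  rewrite lt0n; apply/negP => /eqP c00; apply: (c0_pos _ _ _ _ qd xiC ngal eta).
  by move: trivc; rewrite hc c00 muln0.
case: qd => pp podd _.
have kK : k = (k.-1).+1 by rewrite prednK // (leq_trans _ hk).
set K := k.-1 in kK; rewrite kK in hk; move: K kK hk => K -> hk.
have K0 : (0 < K)%N by apply: leq_trans c0pos _.
have cK : (c0 <= K)%N by [].
have kap : (kappa p D c0 <= K.+1)%N by rewrite /kappa; case: ifP => _ //; apply: ltnW.
have triv : forall z, zD_unit p D z -> ((p ^ c0)%:Z %| z.1 - 1)%Z ->
     ((p ^ c0)%:Z %| z.2)%Z -> xi z = 1.
  move=> z hu h1 h2; apply: trivc => //; rewrite /in_piPow hc /ram_e.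
  case: (ramified p D) => /=; last by rewrite mul1n h1 h2.
  by rewrite mul2n uphalf_double half_double h1 h2.
have CA := @core_all R p D xi gamma c0 K pp podd xiC triv K0 cK kap.
rewrite /Hhat big1 ?mulr0 // => u _.
set iu := invmod (p ^ K.+1) u.
move: ha; rewrite !EuclidZ // => /orP [/orP [ha|ha]|ha].
-
  rewrite exchange_big big1 // => x2 _; rewrite exchange_big big1 // => x3 _.
  transitivity ((psi u)^* * e_q R (p ^ K.+1) (a2 * x2%:Z + a3 * x3%:Z - u%:Z * a1 * a2 * a3) *
    \sum_(x1 < p ^ K.+1) Hfun p D xi gamma c0 K.+1 ((iu * x2 * x3 * x1)%N%:Z) 1 * e_q R (p ^ K.+1) (a1 * x1%:Z)); last by rewrite CA //; exact: mulr0.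
  rewrite big_distrr; apply: eq_bigr => x1 _ /=.
  have -> : (iu * x1 * x2 * x3 = iu * x2 * x3 * x1)%N by ring.
  rewrite (_ : a1 * x1%:Z + _ + _ - _ = a1 * x1%:Z + (a2 * x2%:Z + a3 * x3%:Z - u%:Z * a1 * a2 * a3)); last by ring.
  rewrite e_qD; ring.
-
  apply: big1 => x1 _; rewrite exchange_big big1 // => x3 _.
  transitivity ((psi u)^* * e_q R (p ^ K.+1) (a1 * x1%:Z + a3 * x3%:Z - u%:Z * a1 * a2 * a3) *
    \sum_(x2 < p ^ K.+1) Hfun p D xi gamma c0 K.+1 ((iu * x1 * x3 * x2)%N%:Z) 1 * e_q R (p ^ K.+1) (a2 * x2%:Z)); last by rewrite CA //; exact: mulr0.
  rewrite big_distrr; apply: eq_bigr => x2 _ /=.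
  have -> : (iu * x1 * x2 * x3 = iu * x1 * x3 * x2)%N by ring.
  rewrite (_ : a1 * x1%:Z + _ + _ - _ = a2 * x2%:Z + (a1 * x1%:Z + a3 * x3%:Z - u%:Z * a1 * a2 * a3)); last by ring.
  rewrite e_qD; ring.
-
  apply: big1 => x1 _; apply: big1 => x2 _.
  transitivity ((psi u)^* * e_q R (p ^ K.+1) (a1 * x1%:Z + a2 * x2%:Z - u%:Z * a1 * a2 * a3) *
    \sum_(x3 < p ^ K.+1) Hfun p D xi gamma c0 K.+1 ((iu * x1 * x2 * x3)%N%:Z) 1 * e_q R (p ^ K.+1) (a3 * x3%:Z)); last by rewrite CA //; exact: mulr0.
  rewrite big_distrr; apply: eq_bigr => x3 _ /=.
  rewrite (_ : a1 * x1%:Z + _ + _ - _ = a3 * x3%:Z + (a1 * x1%:Z + a2 * x2%:Z - u%:Z * a1 * a2 * a3)); last by ring.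
  rewrite e_qD; ring.
Qed.
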